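(* Let $R$ be a commutative refinement ring. Then every stably free $R$-module is free.
   Context: A ring $R$ is a refinement ring if the monoid $V(R)$ of isomorphism classes of finitely generated projective $R$-modules (under direct sum) has the refinement property: whenever $x_1+x_2=y_1+y_2$ in $V(R)$, there exist $z_{ij}\in V(R)$ with $x_i=z_{i1}+z_{i2}$ and $y_j=z_{1j}+z_{2j}$. *)

(* Defs.v *)
From mathcomp Require Import all_boot all_algebra.
Set Implicit Arguments. Unset Strict Implicit. Unset Printing Implicit Defensive.
Import GRing.Theory.
Local Open Scope ring_scope.

(* Modules over a commutative ring R are MathComp's [lmodType R].
   Direct sum M (+) N is the product module [(M * N)%type];
   the free module R^n is the row-vector module ['rV[R]_n]. *)

Definition is_linmap (R : comPzRingType) (M N : lmodType R) (f : M -> N) : Prop :=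
  forall (a : R) (x y : M), f (a *: x + y) = a *: f x + f y.

Definition mod_iso (R : comPzRingType) (M N : lmodType R) : Prop :=
  exists f : M -> N, is_linmap f /\ bijective f.

Definition fin_gen (R : comPzRingType) (M : lmodType R) : Prop :=
  exists (n : nat) (f : 'rV[R]_n -> M), is_linmap f /\ (forall y : M, exists x, f x = y).

Definition projective (R : comPzRingType) (M : lmodType R) : Prop :=
  forall (A B : lmodType R) (g : A -> B) (h : M -> B),
    is_linmap g -> (forall b : B, exists a, g a = b) -> is_linmap h ->
    exists k : M -> A, is_linmap k /\ (forall x, g (k x) = h x).

Definition fgproj (R : comPzRingType) (M : lmodType R) : Prop :=
  fin_gen M /\ projective M.

(* R is a refinement ring: V(R) (iso classes of f.g. projective modules under
   direct sum) has the refinement property. *)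
Definition refinement_ring (R : comPzRingType) : Prop :=
  forall X1 X2 Y1 Y2 : lmodType R,
    fgproj X1 -> fgproj X2 -> fgproj Y1 -> fgproj Y2 ->
    mod_iso (X1 * X2)%type (Y1 * Y2)%type ->
    exists Z11 Z12 Z21 Z22 : lmodType R,
      [/\ fgproj Z11, fgproj Z12, fgproj Z21 & fgproj Z22] /\
      [/\ mod_iso X1 (Z11 * Z12)%type, mod_iso X2 (Z21 * Z22)%type,
          mod_iso Y1 (Z11 * Z21)%type & mod_iso Y2 (Z12 * Z22)%type].

Definition stably_free (R : comPzRingType) (M : lmodType R) : Prop :=
  exists n m : nat, mod_iso (M * 'rV[R]_n)%type 'rV[R]_m.

(* Free (of finite rank; a stably free module is finitely generated). *)
Definition free_mod (R : comPzRingType) (M : lmodType R) : Prop :=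
  exists k : nat, mod_iso M 'rV[R]_k.

(* Main.v *)
Require Import Defs.
From mathcomp Require Import all_boot all_algebra.
From Stdlib Require Import IndefiniteDescription.
Set Implicit Arguments. Unset Strict Implicit. Unset Printing Implicit Defensive.
Import GRing.Theory.
Local Open Scope ring_scope.

Section Aux.
Variable R : comPzRingType.

Lemma lin0 (M N : lmodType R) (f : M -> N) : is_linmap f -> f 0 = 0.
Proof.
move=> H; have := H (-1) 0 0.
by rewrite scaler0 addr0 scaleN1r addNr.
Qed.

Lemma linD (M N : lmodType R) (f : M -> N) : is_linmap f -> forall x y, f (x + y) = f x + f y.
Proof. by move=> H x y; have := H 1 x y; rewrite !scale1r. Qed.

Lemma linZ (M N : lmodType R) (f : M -> N) : is_linmap f -> forall a x, f (a *: x) = a *: f x.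
Proof. by move=> H a x; have := H a x 0; rewrite addr0 (lin0 H) addr0. Qed.

Lemma lin_sum (M N : lmodType R) (f : M -> N) (I : Type) (r : seq I) (F : I -> M) :
  is_linmap f -> f (\sum_(i <- r) F i) = \sum_(i <- r) f (F i).
Proof.
move=> H; elim: r => [|a r IH]; first by rewrite !big_nil (lin0 H).
by rewrite !big_cons (linD H) IH.
Qed.

Lemma lin_comp (A B C : lmodType R) (f : A -> B) (g : B -> C) :
  is_linmap f -> is_linmap g -> is_linmap (g \o f).
Proof. by move=> Hf Hg a x y /=; rewrite Hf Hg. Qed.

Lemma lin_inv (M N : lmodType R) (f : M -> N) (g : N -> M) :
  is_linmap f -> cancel f g -> cancel g f -> is_linmap g.
Proof.
move=> Hf fK gK a x y.
by rewrite -{1}(gK x) -{1}(gK y) -Hf fK.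
Qed.

Lemma scale_pair (M N : lmodType R) (a : R) (x : M) (y : N) :
  a *: ((x, y) : (M * N)%type) = (a *: x, a *: y).
Proof. by []. Qed.

Lemma iso_refl (M : lmodType R) : mod_iso M M.
Proof. by exists id; split => //; exists id. Qed.

Lemma iso_sym (M N : lmodType R) : mod_iso M N -> mod_iso N M.
Proof.
move=> [f [Hf [g fK gK]]]; exists g; split; first exact: lin_inv Hf fK gK.
by exists f.
Qed.

Lemma iso_trans (M N P : lmodType R) : mod_iso M N -> mod_iso N P -> mod_iso M P.
Proof.
move=> [f [Hf bf]] [g [Hg bg]]; exists (g \o f); split; first exact: lin_comp.
exact: bij_comp.
Qed.

Lemma iso_prod (M M' N N' : lmodType R) :
  mod_iso M M' -> mod_iso N N' -> mod_iso (M * N)%type (M' * N')%type.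
Proof.
move=> [f [Hf [f' fK fK']]] [g [Hg [g' gK gK']]].
exists (fun p => (f p.1, g p.2)); split.
  by move=> a [x1 x2] [y1 y2] /=; rewrite Hf Hg.
exists (fun p => (f' p.1, g' p.2)).
  by move=> [x y] /=; rewrite fK gK.
by move=> [x y] /=; rewrite fK' gK'.
Qed.

Lemma iso_comm (M N : lmodType R) : mod_iso (M * N)%type (N * M)%type.
Proof.
exists (fun p => (p.2, p.1)); split; first by move=> a [] ? ? [] ? ?.
by exists (fun p => (p.2, p.1)); case.
Qed.

Lemma iso_assoc (M N P : lmodType R) : mod_iso (M * (N * P))%type ((M * N) * P)%type.
Proof.
exists (fun p => ((p.1, p.2.1), p.2.2)); split; first by move=> a [? [? ?]] [? [? ?]].
by exists (fun p => (p.1.1, (p.1.2, p.2))); [case=> ? [] | case=> [[]]].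
Qed.

Lemma iso_split (a b : nat) : mod_iso 'rV[R]_(a + b) ('rV[R]_a * 'rV[R]_b)%type.
Proof.
exists (fun v => (lsubmx v, rsubmx v)); split.
  by move=> c x y /=; rewrite !linearD !linearZ.
exists (fun p => row_mx p.1 p.2).
  by move=> v /=; rewrite hsubmxK.
by move=> [x y] /=; rewrite row_mxKl row_mxKr.
Qed.

Lemma iso_zero (M : lmodType R) : mod_iso (M * 'rV[R]_0)%type M.
Proof.
exists fst; split; first by move=> ? [] ? ? [] ? ?.
exists (fun x => (x, 0)) => // [[x y]] /=.
by rewrite (thinmx0 y).
Qed.

Lemma iso_to_zero (M N : lmodType R) : mod_iso (M * N)%type 'rV[R]_0 -> mod_iso M 'rV[R]_0.
Proof.
move=> [f [Hf [g fK gK]]].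
exists (fun _ => 0); split; first by move=> a x y; rewrite scaler0 addr0.
exists (fun _ => 0) => [x|v]; last by rewrite (thinmx0 v).
have := fK (x, 0); have := fK (0, 0).
by rewrite (thinmx0 (f (x, 0))) (thinmx0 (f (0,0))) => -> [].
Qed.

Lemma fin_gen_rV (n : nat) : fin_gen 'rV[R]_n.
Proof. by exists n, id; split => // y; exists y. Qed.

Lemma proj_rV (n : nat) : projective 'rV[R]_n.
Proof.
move=> A B g h Hg Hs Hh.
pose gi b := proj1_sig (constructive_indefinite_description _ (Hs b)).
have giK b : g (gi b) = b by rewrite /gi; case: constructive_indefinite_description.
exists (fun x : 'rV[R]_n => \sum_(i < n) x 0 i *: gi (h 'e_i)); split.
  move=> a x y.
  under eq_bigr => i _ do rewrite !mxE scalerDl -scalerA.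
  by rewrite big_split -scaler_sumr.
move=> x; rewrite (lin_sum _ _ Hg).
under eq_bigr => i _ do rewrite (linZ Hg) giK -(linZ Hh).
by rewrite -(lin_sum _ _ Hh) -row_sum_delta.
Qed.

Lemma fgproj_summand (X Y : lmodType R) (m : nat) :
  mod_iso (X * Y)%type 'rV[R]_m -> fgproj X.
Proof.
move=> [f [Hf [f' fK fK']]].
have Hf' := lin_inv Hf fK fK'.
pose s (x : X) := f (x, 0).
pose p (v : 'rV[R]_m) := (f' v).1.
have Hs : is_linmap s.
  move=> a x y; rewrite /s -Hf; congr f.
  have -> : a *: (x, 0) + (y, 0) = ((a *: x + y, a *: 0 + 0) : (X * Y)%type) by [].
  by rewrite scaler0 addr0.
have Hp : is_linmap p by move=> a x y; rewrite /p Hf'.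
have ps x : p (s x) = x by rewrite /p /s fK.
split.
  exists m, p; split => // y; by exists (s y).
move=> A B g h Hg Hsurj Hh.
have [k [Hk gk]] := proj_rV Hg Hsurj (lin_comp Hp Hh).
exists (k \o s); split; first exact: lin_comp.
by move=> x /=; rewrite gk /= ps.
Qed.

Lemma fgproj_rV (n : nat) : fgproj 'rV[R]_n.
Proof. split; [exact: fin_gen_rV | exact: proj_rV]. Qed.

Lemma rv1E (r : 'rV[R]_1) : r = (r 0 0) *: const_mx 1.
Proof. by apply/rowP => i; rewrite !mxE mulr1 (ord1 i). Qed.

Lemma rv1C (r s : 'rV[R]_1) : (r 0 0) *: s = (s 0 0) *: r.
Proof. by apply/rowP => i; rewrite !mxE (ord1 i) mulrC. Qed.

Lemma annih (A B : lmodType R) (f : 'rV[R]_1 -> (A * B)%type) (f' : _ -> _) :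
  is_linmap f -> cancel f f' -> cancel f' f ->
  forall r, (f r).2 = 0 -> forall b : B, (r 0 0) *: b = 0.
Proof.
move=> Hf fK fK' r H0 b.
pose s := f' (0, b).
have e1 : f ((r 0 0) *: s) = (0, (r 0 0) *: b) by rewrite (linZ Hf) /s fK' scale_pair scaler0.
have e2 : f ((s 0 0) *: r) = ((s 0 0) *: (f r).1, 0).
  by rewrite (linZ Hf); case: (f r) H0 => x y /= ->; rewrite scale_pair scaler0.
by move: e2; rewrite -rv1C e1 => -[].
Qed.

Lemma key (A B C : lmodType R) :
  mod_iso 'rV[R]_1 (A * B)%type -> mod_iso 'rV[R]_1 (C * B)%type -> mod_iso A C.
Proof.
move=> [f1 [H1 [f1' K1 K1']]] [f2 [H2 [f2' K2 K2']]].
have H1' := lin_inv H1 K1 K1'; have H2' := lin_inv H2 K2 K2'.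
have tr (f : 'rV[R]_1 -> (A * B)%type) f' (g : 'rV[R]_1 -> (C * B)%type) :
    is_linmap f -> cancel f f' -> cancel f' f -> is_linmap g ->
    forall r, (f r).2 = 0 -> (g r).2 = 0.
  move=> Hf fK fK' Hg r Hr.
  rewrite (rv1E r) (linZ Hg) /=; exact: (annih Hf fK fK' Hr).
have tr' (f : 'rV[R]_1 -> (C * B)%type) f' (g : 'rV[R]_1 -> (A * B)%type) :
    is_linmap f -> cancel f f' -> cancel f' f -> is_linmap g ->
    forall r, (f r).2 = 0 -> (g r).2 = 0.
  move=> Hf fK fK' Hg r Hr.
  rewrite (rv1E r) (linZ Hg) /=; exact: (annih Hf fK fK' Hr).
exists (fun a => (f2 (f1' (a, 0))).1); split.
  move=> c x y.
  have -> : ((c *: x + y, 0) : (A * B)%type) = c *: (x, 0) + (y, 0).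
    have -> : c *: (x, 0) + (y, 0) = ((c *: x + y, c *: 0 + 0) : (A * B)%type) by [].
    by rewrite scaler0 addr0.
  by rewrite H1' H2.
exists (fun c => (f1 (f2' (c, 0))).1).
  move=> a.
  have h2 : (f2 (f1' (a, 0))).2 = 0 by apply: (tr _ _ _ H1 K1 K1' H2); rewrite K1'.
  have -> : ((f2 (f1' (a, 0))).1, 0) = f2 (f1' (a, 0)) by move: h2; case: (f2 _) => ? ? /= ->.
  by rewrite K2 K1'.
move=> c.
have h2 : (f1 (f2' (c, 0))).2 = 0 by apply: (tr' _ _ _ H2 K2 K2' H1); rewrite K2'.
have -> : ((f1 (f2' (c, 0))).1, 0) = f1 (f2' (c, 0)) by move: h2; case: (f1 _) => ? ? /= ->.
by rewrite K1 K2'.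
Qed.

Lemma step (k : nat) (M : lmodType R) : refinement_ring R ->
  fgproj M -> mod_iso (M * 'rV[R]_1)%type 'rV[R]_k.+1 -> mod_iso M 'rV[R]_k.
Proof.
move=> Hr HM Hiso.
have Hiso' : mod_iso (M * 'rV[R]_1)%type ('rV[R]_k * 'rV[R]_1)%type.
  by have := iso_split k 1; rewrite addn1 => Hs; exact: iso_trans Hiso Hs.
have [Z11 [Z12 [Z21 [Z22 [_ [i1 i2 i3 i4]]]]]] :=
  Hr _ _ _ _ HM (fgproj_rV 1) (fgproj_rV k) (fgproj_rV 1) Hiso'.
have k12 : mod_iso Z21 Z12 := key i2 i4.
apply: (iso_trans i1); apply: iso_sym; apply: (iso_trans i3).
exact: iso_prod (iso_refl _) k12.
Qed.

End Aux.

Theorem corollary2p4 (R : comPzRingType) :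
  refinement_ring R -> forall M : lmodType R, stably_free M -> free_mod M.
Proof.
move=> Hr M [n [m Hiso]].
elim: n M m Hiso => [|n IH] M m Hiso.
  by exists m; exact: iso_trans (iso_sym (iso_zero M)) Hiso.
have H1 : mod_iso ((M * 'rV[R]_n) * 'rV[R]_1)%type 'rV[R]_m.
  apply: iso_trans Hiso; apply: iso_sym; apply: iso_trans (iso_assoc _ _ _).
  by have := @iso_split R n 1; rewrite addn1 => Hs; exact: iso_prod (iso_refl _) Hs.
have Hfg : fgproj (M * 'rV[R]_n)%type := fgproj_summand H1.
case: m H1 Hiso => [|k] H1 Hiso.
  exact: IH (iso_to_zero H1).
exact: IH (step Hr Hfg H1).
Qed.
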